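(* Let $G$ be a profinite group satisfying the maximum condition on closed subgroups. (i) If $H$ is an orbital closed subgroup of $G$, then $\mathrm{i}_G(H)$ is an isolated orbital closed subgroup of $G$; moreover, if $H$ is normal in $G$ then so is $\mathrm{i}_G(H)$. (ii) If $G$ is orbitally sound and $H$ is a closed subgroup of finite index in $G$, then $H$ is orbitally sound.
   Context: A closed subgroup $H$ of a profinite group $G$ is $G$-orbital if $\mathbf{N}_G(H)$ is open in $G$. An orbital closed subgroup $H$ is isolated orbital if for every orbital closed subgroup $H'$ with $H\lneq H'\le G$ we have $[H':H]=\infty$. $G$ is orbitally sound if every isolated orbital closed subgroup of $G$ is normal. For an orbital closed subgroup $H$ of $G$, its isolator $\mathrm{i}_G(H)$ is the closed subgroup generated by all orbital closed subgroups $L$ of $G$ with $H\le L$ and $[L:H]<\infty$. *)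

(* Defs.v *)
From Stdlib Require Import List Classical.
Import ListNotations.

Definition subset {T : Type} (A B : T -> Prop) : Prop := forall x, A x -> B x.

Record ProfiniteGroup := {
  carrier :> Type;
  mul : carrier -> carrier -> carrier;
  inv : carrier -> carrier;
  one : carrier;
  mulA : forall x y z, mul x (mul y z) = mul (mul x y) z;
  mul1g : forall x, mul one x = x;
  mulg1 : forall x, mul x one = x;
  mulVg : forall x, mul (inv x) x = one;
  mulgV : forall x, mul x (inv x) = one;
  is_open : (carrier -> Prop) -> Prop;
  open_full : is_open (fun _ => True);
  open_inter : forall U V, is_open U -> is_open V -> is_open (fun x => U x /\ V x);
  open_union : forall (F : (carrier -> Prop) -> Prop),
      (forall U, F U -> is_open U) -> is_open (fun x => exists U, F U /\ U x);
  open_ext : forall U V, (forall x, U x <-> V x) -> is_open U -> is_open V;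
  mul_cont : forall U x y, is_open U -> U (mul x y) ->
      exists V W, is_open V /\ is_open W /\ V x /\ W y /\
        (forall a b, V a -> W b -> U (mul a b));
  inv_cont : forall U, is_open U -> is_open (fun x => U (inv x));
  compact : forall (F : (carrier -> Prop) -> Prop),
      (forall U, F U -> is_open U) -> (forall x, exists U, F U /\ U x) ->
      exists l : list (carrier -> Prop),
        (forall U, In U l -> F U) /\ (forall x, exists U, In U l /\ U x);
  hausdorff : forall x y, x <> y -> exists U V, is_open U /\ is_open V /\ U x /\ V y /\
      (forall z, U z -> V z -> False);
  (* totally disconnected: every connected subset has at most one point *)
  totally_disconnected : forall S : carrier -> Prop,
      (forall U V, is_open U -> is_open V -> subset S (fun x => U x \/ V x) ->
         (forall x, S x -> U x -> V x -> False) ->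
         subset S U \/ subset S V) ->
      forall x y, S x -> S y -> x = y
}.

Arguments mul {p}. Arguments inv {p}. Arguments one {p}. Arguments is_open {p}.

Section Defs.
Variable G : ProfiniteGroup.

Definition full : G -> Prop := fun _ => True.

Definition open_in (A U : G -> Prop) : Prop :=
  subset U A /\ exists V, is_open V /\ forall x, A x -> (U x <-> V x).
Definition closed_in (A C : G -> Prop) : Prop :=
  subset C A /\ open_in A (fun x => A x /\ ~ C x).

Definition is_subgroup (H : G -> Prop) : Prop :=
  H one /\ (forall x y, H x -> H y -> H (mul x y)) /\ (forall x, H x -> H (inv x)).

Definition closed_subgroup_in (A H : G -> Prop) : Prop :=
  is_subgroup H /\ closed_in A H.
Definition closed_subgroup (H : G -> Prop) : Prop := closed_subgroup_in full H.

Definition conj (x g : G) : G := mul (inv g) (mul x g).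

Definition normalizer_in (A H : G -> Prop) : G -> Prop :=
  fun g => A g /\ forall x, H x <-> H (conj x g).

Definition normal_in (A H : G -> Prop) : Prop :=
  forall g x, A g -> H x -> H (conj x g).

(* [L : H] < infinity, for H <= L: finitely many left cosets yH, y in L *)
Definition finite_index (H L : G -> Prop) : Prop :=
  exists l : list G, (forall y, In y l -> L y) /\
    forall x, L x -> exists y, In y l /\ H (mul (inv y) x).

Definition orbital_in (A H : G -> Prop) : Prop :=
  closed_subgroup_in A H /\ open_in A (normalizer_in A H).

Definition isolated_orbital_in (A H : G -> Prop) : Prop :=
  orbital_in A H /\
  forall H', orbital_in A H' -> subset H H' -> (exists x, H' x /\ ~ H x) ->
    ~ finite_index H H'.

Definition orbitally_sound_in (A : G -> Prop) : Prop :=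
  forall H, isolated_orbital_in A H -> normal_in A H.

Definition orbital := orbital_in full.
Definition isolated_orbital := isolated_orbital_in full.
Definition orbitally_sound := orbitally_sound_in full.
Definition normal := normal_in full.

(* closed subgroup generated by all orbital L with H <= L, [L:H] finite *)
Definition isolator (H : G -> Prop) : G -> Prop :=
  fun x => forall K, closed_subgroup K ->
    (forall L, orbital L -> subset H L -> finite_index H L -> subset L K) -> K x.

Definition max_closed_subgroups : Prop :=
  forall C : nat -> G -> Prop,
    (forall n, closed_subgroup (C n)) -> (forall n, subset (C n) (C (S n))) ->
    exists m, forall n, m <= n -> forall x, C n x <-> C m x.

End Defs.
Arguments full {G}.

(* Main.v *)
Require Import Defs.
From Stdlib Require Import List Classical ClassicalEpsilon Lia Arith.
Import ListNotations.

Notation "x ** y" := (mul x y) (at level 40, left associativity).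
Notation cjg x g := (conj _ x g).
Notation fi := (finite_index _).



Section GroupLemmas.
Lemma mulVK {G : ProfiniteGroup} (x y : G) : inv x ** (x ** y) = y.
Proof. rewrite mulA, mulVg, mul1g; reflexivity. Qed.
Lemma mulKV {G : ProfiniteGroup} (x y : G) : x ** (inv x ** y) = y.
Proof. rewrite mulA, mulgV, mul1g; reflexivity. Qed.
Lemma mulgK {G : ProfiniteGroup} (x y : G) : (y ** x) ** inv x = y.
Proof. rewrite <- mulA, mulgV, mulg1; reflexivity. Qed.
Lemma mulgKV {G : ProfiniteGroup} (x y : G) : (y ** inv x) ** x = y.
Proof. rewrite <- mulA, mulVg, mulg1; reflexivity. Qed.
Lemma inv_uniq {G : ProfiniteGroup} (x y : G) : x ** y = one -> y = inv x.
Proof. intro h. rewrite <- (mulVK x y), h, mulg1. reflexivity. Qed.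
Lemma inv_inv {G : ProfiniteGroup} (x : G) : inv (inv x) = x.
Proof. symmetry. apply inv_uniq. apply mulVg. Qed.
Lemma inv_mul {G : ProfiniteGroup} (x y : G) : inv (x ** y) = inv y ** inv x.
Proof. symmetry. apply inv_uniq. rewrite mulA, <- (mulA _ x y), mulgV, mulg1, mulgV. reflexivity. Qed.
Lemma inv_one {G : ProfiniteGroup} : inv (@one G) = one.
Proof. symmetry; apply inv_uniq; apply mulg1. Qed.
Lemma conj_mul {G : ProfiniteGroup} (x y g : G) : cjg (x ** y) g = cjg x g ** cjg y g.
Proof. unfold conj. rewrite <- !mulA. rewrite mulKV. reflexivity. Qed.
Lemma conj_conj {G : ProfiniteGroup} (x g h : G) : cjg (cjg x g) h = cjg x (g ** h).
Proof. unfold conj. rewrite inv_mul, <- !mulA. reflexivity. Qed.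
Lemma conj_one {G : ProfiniteGroup} (x : G) : cjg x one = x.
Proof. unfold conj. rewrite inv_one, mul1g, mulg1. reflexivity. Qed.
Lemma conjK {G : ProfiniteGroup} (x g : G) : cjg (cjg x g) (inv g) = x.
Proof. rewrite conj_conj, mulgV, conj_one. reflexivity. Qed.
Lemma conjVK {G : ProfiniteGroup} (x g : G) : cjg (cjg x (inv g)) g = x.
Proof. rewrite conj_conj, mulVg, conj_one. reflexivity. Qed.
Lemma conj_inv {G : ProfiniteGroup} (x g : G) : cjg (inv x) g = inv (cjg x g).
Proof. unfold conj. rewrite !inv_mul, inv_inv, <- !mulA. reflexivity. Qed.
Lemma conj_1 {G : ProfiniteGroup} (g : G) : cjg one g = one.
Proof. unfold conj. rewrite mul1g, mulVg. reflexivity. Qed.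
End GroupLemmas.

Fixpoint pow {G : ProfiniteGroup} (x : G) (n : nat) : G :=
  match n with 0 => one | S n => x ** pow x n end.
Definition prod {G : ProfiniteGroup} (w : list G) : G := fold_right mul one w.

Lemma pow_add {G : ProfiniteGroup} (x : G) a b : pow x (a + b) = pow x a ** pow x b.
Proof. induction a; simpl. now rewrite mul1g. now rewrite IHa, mulA. Qed.
Lemma pow_mul {G : ProfiniteGroup} (x : G) a b : pow x (a * b) = pow (pow x a) b.
Proof. induction b; simpl. now rewrite Nat.mul_0_r. rewrite Nat.mul_succ_r, Nat.add_comm, pow_add, IHb. reflexivity. Qed.
Lemma prod_repeat {G : ProfiniteGroup} (x : G) n : prod (repeat x n) = pow x n.
Proof. induction n; simpl; auto. unfold prod in *; simpl. now rewrite IHn. Qed.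
Lemma prod_app {G : ProfiniteGroup} (u v : list G) : prod (u ++ v) = prod u ** prod v.
Proof. induction u; unfold prod in *; simpl. now rewrite mul1g. now rewrite IHu, mulA. Qed.
Lemma prod_cons {G : ProfiniteGroup} (x : G) w : prod (x :: w) = x ** prod w.
Proof. reflexivity. Qed.
Lemma prod_conj {G : ProfiniteGroup} (w : list G) g : prod (map (fun s => cjg s g) w) = cjg (prod w) g.
Proof. induction w; unfold prod in *; simpl. now rewrite conj_1. now rewrite IHw, conj_mul. Qed.
Lemma inv_prod {G : ProfiniteGroup} (w : list G) : inv (prod w) = prod (rev (map inv w)).
Proof. induction w. apply inv_one. simpl. rewrite prod_app, <- IHw, prod_cons, inv_mul. unfold prod at 3. simpl. now rewrite mulg1. Qed.

Lemma sg_one {G : ProfiniteGroup} (H : G -> Prop) : is_subgroup G H -> H one.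
Proof. intros [a _]; exact a. Qed.
Lemma sg_mul {G : ProfiniteGroup} (H : G -> Prop) x y : is_subgroup G H -> H x -> H y -> H (x ** y).
Proof. intros [_ [b _]]; auto. Qed.
Lemma sg_inv {G : ProfiniteGroup} (H : G -> Prop) x : is_subgroup G H -> H x -> H (inv x).
Proof. intros [_ [_ c]]; auto. Qed.
Lemma sg_invE {G : ProfiniteGroup} (H : G -> Prop) x : is_subgroup G H -> H (inv x) -> H x.
Proof. intros s h. rewrite <- (inv_inv x). now apply sg_inv. Qed.
Lemma sg_cancel_l {G : ProfiniteGroup} (H : G -> Prop) x y : is_subgroup G H -> H x -> H (x ** y) -> H y.
Proof. intros s hx h. rewrite <- (mulVK x y). apply sg_mul; auto. now apply sg_inv. Qed.
Lemma sg_pow {G : ProfiniteGroup} (H : G -> Prop) x n : is_subgroup G H -> H x -> H (pow x n).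
Proof. intros s h; induction n; simpl. now apply sg_one. now apply sg_mul. Qed.
Lemma sg_prod {G : ProfiniteGroup} (H : G -> Prop) w : is_subgroup G H -> (forall y, In y w -> H y) -> H (prod w).
Proof. intros s; induction w; intro h; unfold prod; simpl. now apply sg_one. apply sg_mul; auto. apply h; simpl; auto.
  apply IHw; intros; apply h; simpl; auto. Qed.

Lemma sg_inter {G : ProfiniteGroup} (A B : G -> Prop) : is_subgroup G A -> is_subgroup G B -> is_subgroup G (fun x => A x /\ B x).
Proof. intros a b. repeat split; try apply sg_one; auto; try apply sg_mul; try apply sg_inv; tauto. Qed.
Lemma sg_ext {G : ProfiniteGroup} (A B : G -> Prop) : (forall x, A x <-> B x) -> is_subgroup G A -> is_subgroup G B.
Proof. intros e [a [b c]]. repeat split. apply e; auto. intros x y hx hy; apply e; apply b; apply e; auto.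
  intros; apply e; apply c; apply e; auto. Qed.

Definition cj {G : ProfiniteGroup} (A : G -> Prop) (g : G) : G -> Prop := fun x => A (cjg x (inv g)).
Lemma sg_cj {G : ProfiniteGroup} (A : G -> Prop) g : is_subgroup G A -> is_subgroup G (cj A g).
Proof. intros s. unfold cj. repeat split. rewrite conj_1; apply sg_one; auto.
  intros; rewrite conj_mul; apply sg_mul; auto. intros; rewrite conj_inv; apply sg_inv; auto. Qed.
Lemma cj_cj {G : ProfiniteGroup} (A : G -> Prop) g h x : cj (cj A g) h x <-> cj A (g ** h) x.
Proof. unfold cj. rewrite conj_conj, inv_mul. tauto. Qed.
Lemma cj_memK {G : ProfiniteGroup} (A : G -> Prop) g x : cj A g (cjg x g) <-> A x.
Proof. unfold cj. rewrite conjK. tauto. Qed.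

Definition nz {G : ProfiniteGroup} (A : G -> Prop) := normalizer_in G full A.
Lemma sg_nz {G : ProfiniteGroup} (A : G -> Prop) : is_subgroup G (nz A).
Proof. unfold nz, normalizer_in, full. split; [|split].
  - split; auto. intro z. rewrite conj_one. tauto.
  - intros x y [_ hx] [_ hy]. split; auto. intro z. rewrite <- conj_conj. rewrite hx. apply hy.
  - intros x [_ hx]. split; auto. intro z. rewrite (hx (cjg z (inv x))), conjVK. tauto. Qed.
Lemma nz_cj {G : ProfiniteGroup} (A : G -> Prop) n x : nz A n -> (cj A n x <-> A x).
Proof. intros hn. unfold cj. pose proof (sg_inv _ _ (sg_nz A) hn) as [_ h]. rewrite <- h. tauto. Qed.


Lemma fi_ext2 {G : ProfiniteGroup} (A B B' : G -> Prop) : (forall x, B x <-> B' x) -> fi A B -> fi A B'.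
Proof. intros e [l [h1 h2]]. exists l. split. intros; apply e; auto. intros x hx; apply h2, e, hx. Qed.
Lemma fi_coarse {G : ProfiniteGroup} (A A' B : G -> Prop) : (forall x, A x -> A' x) -> fi A B -> fi A' B.
Proof. intros e [l [h1 h2]]. exists l. split; auto. intros x hx. destruct (h2 x hx) as [y [? ?]]. eauto. Qed.
Lemma fi_refl {G : ProfiniteGroup} (A : G -> Prop) : is_subgroup G A -> fi A A.
Proof. intros s. exists [one]. split. intros y [<-|[]]. now apply sg_one. intros x hx. exists one. split. now left. now rewrite inv_one, mul1g. Qed.

Lemma pick_list {G : ProfiniteGroup} {T : Type} (l : list T) (Q : T -> G -> Prop) :
  exists l' : list G, (forall z, In z l' -> exists t, In t l /\ Q t z) /\
     forall t, In t l -> (exists z, Q t z) -> exists z, In z l' /\ Q t z.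
Proof. induction l as [|a l IH].
  - exists []. split. intros _ []. intros _ [].
  - destruct IH as [l' [h1 h2]]. destruct (classic (exists z, Q a z)) as [[z hz]|hn].
    + exists (z :: l'). split.
      * intros z' [<-|h]. exists a; split; auto; now left. destruct (h1 z' h) as [t [? ?]]. exists t; split; auto; now right.
      * intros t [<-|ht] he. exists z; split; auto; now left. destruct (h2 t ht he) as [z' [? ?]]. exists z'; split; auto; now right.
    + exists l'. split. intros z' h. destruct (h1 z' h) as [t [? ?]]. exists t; split; auto; now right.
      intros t [<-|ht] he. contradiction. auto. Qed.

Lemma fi_restrict {G : ProfiniteGroup} (K C A : G -> Prop) : is_subgroup G K -> is_subgroup G A ->
  fi K C -> (forall x, A x -> C x) -> fi (fun x => K x /\ A x) A.
Proof. intros sK sA [l [_ hl]] hAC.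
  destruct (pick_list l (fun y a => A a /\ K (inv y ** a))) as [l' [h1 h2]].
  exists l'. split. intros z hz. destruct (h1 z hz) as [t [_ [? _]]]; auto.
  intros x hx. destruct (hl x (hAC x hx)) as [y [hy hk]].
  destruct (h2 y hy) as [z [hz [hAz hKz]]]. exists x; auto.
  exists z. split; auto. split.
  - replace (inv z ** x) with (inv (inv y ** z) ** (inv y ** x)). apply sg_mul; auto. now apply sg_inv.
    rewrite inv_mul, inv_inv, <- mulA, mulKV. reflexivity.
  - apply sg_mul; auto. now apply sg_inv. Qed.

Lemma fi_inter {G : ProfiniteGroup} (A B C : G -> Prop) : is_subgroup G A -> is_subgroup G B -> is_subgroup G C ->
  fi A C -> fi B C -> fi (fun x => A x /\ B x) C.
Proof. intros sA sB sC [l1 [_ h1]] [l2 [_ h2]].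
  destruct (pick_list (list_prod l1 l2) (fun p c => C c /\ A (inv (fst p) ** c) /\ B (inv (snd p) ** c))) as [l' [k1 k2]].
  exists l'. split. intros z hz. destruct (k1 z hz) as [t [_ [? _]]]; auto.
  intros x hx. destruct (h1 x hx) as [y [hy ha]]. destruct (h2 x hx) as [y' [hy' hb]].
  destruct (k2 (y, y')) as [z [hz [hCz [hAz hBz]]]]. apply in_prod; auto. exists x; simpl; repeat split; auto.
  simpl in *. exists z. split; auto.
  assert (e : forall w, inv z ** x = inv (inv w ** z) ** (inv w ** x)).
  { intro w. rewrite inv_mul, inv_inv, <- mulA, mulKV. reflexivity. }
  split; [rewrite (e y)|rewrite (e y')]; apply sg_mul; auto; now apply sg_inv. Qed.

Lemma fi_trans {G : ProfiniteGroup} (A B C : G -> Prop) : is_subgroup G C -> (forall x, B x -> C x) ->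
  fi A B -> fi B C -> fi A C.
Proof. intros sC hBC [l2 [k2 h2]] [l1 [k1 h1]].
  exists (flat_map (fun y => map (fun z => y ** z) l2) l1). split.
  - intros w hw. apply in_flat_map in hw. destruct hw as [y [hy hw]]. apply in_map_iff in hw. destruct hw as [z [<- hz]].
    apply sg_mul; auto.
  - intros x hx. destruct (h1 x hx) as [y [hy hb]]. destruct (h2 _ hb) as [z [hz ha]].
    exists (y ** z). split. apply in_flat_map. exists y; split; auto. apply in_map_iff; eauto.
    rewrite inv_mul, <- mulA. exact ha. Qed.

Lemma fi_cj {G : ProfiniteGroup} (A B : G -> Prop) g : fi A B -> fi (cj A g) (cj B g).
Proof. intros [l [k h]]. exists (map (fun y => cjg y g) l). split.
  - intros w hw. apply in_map_iff in hw. destruct hw as [y [<- hy]]. apply cj_memK. auto.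
  - intros x hx. unfold cj in hx. destruct (h _ hx) as [y [hy ha]]. exists (cjg y g). split. apply in_map_iff; eauto.
    unfold cj. rewrite conj_mul, conj_inv, conjK. exact ha. Qed.

Lemma nodup_seq_map {T : Type} (f : nat -> T) n : (forall i j, i < j < n -> f i <> f j) -> NoDup (map f (seq 0 n)).
Proof. revert f. induction n; intros f hf. constructor. simpl. constructor.
  - rewrite <- seq_shift, map_map. intro hin. apply in_map_iff in hin. destruct hin as [i [e hi]]. apply in_seq in hi.
    apply (hf 0 (S i)). lia. auto.
  - rewrite <- seq_shift, map_map. apply IHn. intros i j hij. apply hf. lia. Qed.

Lemma fi_torsion {G : ProfiniteGroup} (N A : G -> Prop) x : is_subgroup G N -> fi N A -> A x ->
  is_subgroup G A -> exists k, 0 < k /\ N (pow x k).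
Proof. intros sN [l [_ h]] hx sA.
  set (r := fun i => epsilon (inhabits (@one G)) (fun y => In y l /\ N (inv y ** pow x i))).
  assert (hr : forall i, In (r i) l /\ N (inv (r i) ** pow x i)).
  { intro i. unfold r. apply epsilon_spec. apply h. now apply sg_pow. }
  assert (hnd : ~ NoDup (map r (seq 0 (S (length l))))).
  { intro nd. apply (NoDup_incl_length (l:=map r (seq 0 (S (length l)))) (l':=l)) in nd. rewrite length_map, length_seq in nd. lia.
    intros y hy. apply in_map_iff in hy. destruct hy as [i [<- _]]. apply hr. }
  destruct (classic (exists i j, i < j < S (length l) /\ r i = r j)) as [[i [j [hij e]]]|hn].
  - exists (j - i). split. lia. destruct (hr i) as [_ hi]. destruct (hr j) as [_ hj]. rewrite e in hi.
    replace (pow x (j - i)) with (inv (inv (r j) ** pow x i) ** (inv (r j) ** pow x j)).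
    apply sg_mul; auto. now apply sg_inv.
    assert (ej : pow x j = pow x i ** pow x (j - i)) by (rewrite <- pow_add; f_equal; lia). rewrite ej, inv_mul, inv_inv, <- mulA, mulKV, mulVK. reflexivity.
  - exfalso. apply hnd. apply nodup_seq_map. intros i j hij e. apply hn. eauto. Qed.


Definition Gdec {G : ProfiniteGroup} (x y : G) : {x = y} + {x <> y} := excluded_middle_informative (x = y).

Lemma uniform_exp {G : ProfiniteGroup} (N : G -> Prop) (X : list G) : is_subgroup G N ->
  (forall x, In x X -> exists k, 0 < k /\ N (pow x k)) -> exists K, 0 < K /\ forall x, In x X -> N (pow x K).
Proof. intros sN. induction X as [|a X IH]; intro h.
  - exists 1. split. lia. intros _ [].
  - destruct (h a (or_introl eq_refl)) as [k [hk ha]]. destruct IH as [K [hK hX]]. intros; apply h; now right.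
    exists (k * K). split. nia. intros x [<-|hx].
    + rewrite pow_mul. now apply sg_pow.
    + rewrite Nat.mul_comm, pow_mul. apply sg_pow; auto. Qed.

Definition sumc {G : ProfiniteGroup} (X w : list G) : nat := fold_right (fun x acc => count_occ Gdec w x + acc) 0 X.

Lemma sumc_cons {G : ProfiniteGroup} (X w : list G) y : sumc X (y :: w) = sumc X w + count_occ Gdec X y.
Proof. induction X as [|a X IH]. reflexivity. unfold sumc in *. cbn [fold_right]. rewrite IH. cbn [count_occ].
  destruct (Gdec y a); destruct (Gdec a y); subst; try congruence; lia. Qed.

Lemma len_sumc {G : ProfiniteGroup} (X w : list G) : (forall y, In y w -> In y X) -> length w <= sumc X w.
Proof. induction w as [|y w IH]; intro h; simpl. lia. rewrite sumc_cons.
  assert (count_occ Gdec X y > 0) by (apply count_occ_In; apply h; now left).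
  assert (length w <= sumc X w) by (apply IH; intros; apply h; now right). lia. Qed.

Lemma sumc_le {G : ProfiniteGroup} (X w : list G) K : (forall x, In x X -> count_occ Gdec w x <= K) -> sumc X w <= length X * K.
Proof. induction X as [|a X IH]; intro h; simpl. lia. unfold sumc in *; simpl.
  assert (count_occ Gdec w a <= K) by (apply h; now left). assert (fold_right (fun x acc => count_occ Gdec w x + acc) 0 X <= length X * K) by (apply IH; intros; apply h; now right). lia. Qed.

Fixpoint allw {G : ProfiniteGroup} (X : list G) (n : nat) : list (list G) :=
  match n with 0 => [[]] | S n => flat_map (fun x => map (cons x) (allw X n)) X end.

Lemma allw_in {G : ProfiniteGroup} (X w : list G) : (forall y, In y w -> In y X) -> In w (allw X (length w)).
Proof. induction w as [|y w IH]; intro h; simpl. now left. apply in_flat_map. exists y. split. apply h; now left.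
  apply in_map. apply IH. intros; apply h; now right. Qed.
Lemma allw_wX {G : ProfiniteGroup} (X : list G) n w : In w (allw X n) -> forall y, In y w -> In y X.
Proof. revert w. induction n; simpl; intros w hw. destruct hw as [<-|[]]. intros _ [].
  apply in_flat_map in hw. destruct hw as [x [hx hw]]. apply in_map_iff in hw. destruct hw as [w' [<- hw']].
  intros y [<-|hy]; auto. eapply IHn; eauto. Qed.

Section Dietz.
Lemma dietzmann {G : ProfiniteGroup} (N D S : G -> Prop) (X : list G) :
  is_subgroup G N -> is_subgroup G D -> (forall x, N x -> D x) ->
  (forall g x, D g -> N x -> N (cjg x g)) ->
  (forall x, In x X -> D x) ->
  (forall x g, In x X -> D g -> exists x', In x' X /\ N (inv x' ** cjg x g)) ->
  (forall x, In x X -> exists k, 0 < k /\ N (pow x k)) ->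
  (forall s, S s -> D s) ->
  (forall s, S s -> exists x, In x X /\ N (inv x ** s)) ->
  (forall d, D d -> exists w, (forall y, In y w -> S y) /\ d = prod w) ->
  fi N D.
Proof.
  intros sN sD hND nrm hX hcl htor hSD hS hgen.
  set (eqN := fun a b => N (inv a ** b)).
  assert (erefl : forall a, eqN a a). { intro a. unfold eqN. rewrite mulVg. now apply sg_one. }
  assert (esym : forall a b, eqN a b -> eqN b a).
  { unfold eqN; intros a b h. replace (inv b ** a) with (inv (inv a ** b)). now apply sg_inv. now rewrite inv_mul, inv_inv. }
  assert (etrans : forall a b c, eqN a b -> eqN b c -> eqN a c).
  { unfold eqN; intros a b c h1 h2. replace (inv a ** c) with ((inv a ** b) ** (inv b ** c)). now apply sg_mul.
    rewrite <- mulA, mulKV. reflexivity. }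
  assert (econg : forall a b a' b', D b -> eqN a a' -> eqN b b' -> eqN (a ** b) (a' ** b')).
  { unfold eqN; intros a b a' b' hb h1 h2.
    replace (inv (a ** b) ** (a' ** b')) with (cjg (inv a ** a') b ** (inv b ** b')).
    apply sg_mul; auto. unfold conj. rewrite inv_mul. rewrite <- !mulA. rewrite mulKV. reflexivity. }
  set (wX := fun w : list G => forall y, In y w -> In y X).
  assert (wXD : forall w, wX w -> D (prod w)). { intros w h. apply sg_prod; auto. }
  assert (move : forall w, wX w -> forall x, In x X -> forall j, j <= count_occ Gdec w x ->
            exists r, wX r /\ length r + j = length w /\ eqN (prod w) (pow x j ** prod r)).
  { induction w as [|y w IH]; intros hw x hx j hj.
    - simpl in hj. assert (j = 0) by lia. subst. exists []. split. intros _ []. split. reflexivity. simpl. rewrite mul1g. apply erefl.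
    - assert (hw' : wX w) by (intros z hz; apply hw; now right).
      assert (hy : In y X) by (apply hw; now left).
      simpl in hj. destruct (Gdec y x) as [e|ne].
      + subst y. destruct j as [|j].
        * exists (x :: w). split; auto. split. simpl; lia. simpl. rewrite mul1g. apply erefl.
        * destruct (IH hw' x hx j ltac:(lia)) as [r [hr [hl he]]]. exists r. split; auto. split. simpl; lia.
          rewrite prod_cons. simpl. rewrite <- mulA. apply econg; auto.
      + destruct (IH hw' x hx j hj) as [r [hr [hl he]]].
        assert (hxj : D (pow x j)) by (apply sg_pow; auto).
        destruct (hcl y (pow x j) hy hxj) as [y' [hy' hN]].
        exists (y' :: r). split. intros z [<-|hz]; auto. split. simpl; lia.
        rewrite prod_cons. apply (etrans _ (y ** (pow x j ** prod r))).
        apply econg; auto.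
        replace (y ** (pow x j ** prod r)) with (pow x j ** (cjg y (pow x j) ** prod r)).
        apply econg. apply sg_mul. auto. unfold conj. apply sg_mul; auto. apply sg_inv; auto. apply sg_mul; auto. auto.
        apply erefl. apply econg. auto. apply esym; exact hN. apply erefl.
        unfold conj. rewrite mulA, mulKV, <- mulA. reflexivity. }
  destruct (uniform_exp N X sN htor) as [K [hK hK']].
  set (B := length X * K).
  assert (reduce : forall n w, wX w -> length w <= n -> exists w', wX w' /\ length w' <= B /\ eqN (prod w) (prod w')).
  { induction n as [|n IH]; intros w hw hl.
    - exists w. split; auto. split. lia. apply erefl.
    - destruct (le_lt_dec (length w) B) as [hle|hlt]. exists w. split; auto.
      assert (hex : exists x, In x X /\ K <= count_occ Gdec w x).
      { apply NNPP. intro hn. assert (h1 : sumc X w <= length X * (K - 1)).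
        { apply sumc_le. intros x hx. destruct (le_lt_dec K (count_occ Gdec w x)). exfalso; eauto. lia. }
        pose proof (len_sumc X w hw). unfold B in hlt. nia. }
      destruct hex as [x [hx hc]]. destruct (move w hw x hx K hc) as [r [hr [hlr he]]].
      destruct (IH r hr ltac:(lia)) as [w' [h1 [h2 h3]]]. exists w'. split; auto. split; auto.
      apply (etrans _ (pow x K ** prod r)); auto. apply (etrans _ (prod r)); auto.
      unfold eqN. replace (inv (pow x K ** prod r) ** prod r) with (cjg (inv (pow x K)) (prod r)).
      apply nrm. apply wXD; auto. apply sg_inv; auto. unfold conj. rewrite inv_mul, mulA. reflexivity. }
  exists (flat_map (fun n => map prod (allw X n)) (seq 0 (Datatypes.S B))). split.
  - intros y hy. apply in_flat_map in hy. destruct hy as [n [_ hy]]. apply in_map_iff in hy. destruct hy as [w [<- hw]].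
    apply wXD. intros z hz. eapply allw_wX; eauto.
  - intros d hd. destruct (hgen d hd) as [w [hwS ->]].
    assert (conv : forall w, (forall y, In y w -> S y) -> exists w1, wX w1 /\ eqN (prod w1) (prod w)).
    { clear hwS hd. induction w0 as [|s w0 IH0]; intro hS0.
      - exists []. split. intros _ []. apply erefl.
      - destruct (hS s) as [x [hx hxs]]. apply hS0; now left.
        destruct IH0 as [w1 [hw1 he1]]. intros; apply hS0; now right.
        exists (x :: w1). split. intros z [<-|hz]; auto. rewrite !prod_cons. apply econg; auto. }
    destruct (conv w hwS) as [w1 [hw1 he1]].
    destruct (reduce (length w1) w1 hw1 (le_n _)) as [w2 [hw2 [hl2 he2]]].
    exists (prod w2). split.
    + apply in_flat_map. exists (length w2). split. apply in_seq; lia. apply in_map. apply allw_in; auto.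
    + apply (etrans _ (prod w1)); auto.
Qed.
End Dietz.


Lemma open_in_full {G : ProfiniteGroup} (U : G -> Prop) : open_in G full U <-> is_open U.
Proof. split.
  - intros [_ [V [hV e]]]. apply (open_ext _ V); auto. intro x. symmetry. apply e. exact I.
  - intro h. split. intros x _; exact I. exists U. split; auto. tauto. Qed.

Lemma oext {G : ProfiniteGroup} (U V : G -> Prop) : is_open U -> (forall x, U x <-> V x) -> is_open V.
Proof. intros h e. exact (open_ext _ U V e h). Qed.

Definition closedS {G : ProfiniteGroup} (A : G -> Prop) := is_open (fun x => ~ A x).

Lemma closed_sg_iff {G : ProfiniteGroup} (H : G -> Prop) : closed_subgroup G H <-> is_subgroup G H /\ closedS H.
Proof. unfold closed_subgroup, closed_subgroup_in, closed_in, closedS. split.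
  - intros [s [_ h]]. split; auto. apply open_in_full in h. apply (oext _ _ h). unfold full. tauto.
  - intros [s h]. split; auto. split. intros x _; exact I. apply open_in_full. apply (oext _ _ h). unfold full; tauto. Qed.

Lemma open_local {G : ProfiniteGroup} (A : G -> Prop) : (forall x, A x -> exists U, is_open U /\ U x /\ forall y, U y -> A y) -> is_open A.
Proof. intro h. set (F := fun U : G -> Prop => is_open U /\ forall y, U y -> A y).
  apply (open_ext _ (fun x => exists U, F U /\ U x)).
  - intro x. split. intros [U [[_ hU] hx]]. auto. intro hx. destruct (h x hx) as [U [? [? ?]]]. exists U. split; auto. split; auto.
  - apply open_union. intros U [? _]; auto. Qed.

Lemma open_lmul {G : ProfiniteGroup} (U : G -> Prop) a : is_open U -> is_open (fun x => U (a ** x)).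
Proof. intro hU. apply open_local. intros x hx. destruct (mul_cont _ U a x hU hx) as [V [W [hV [hW [ha [hw h]]]]]].
  exists W. split; auto. Qed.
Lemma open_rmul {G : ProfiniteGroup} (U : G -> Prop) a : is_open U -> is_open (fun x => U (x ** a)).
Proof. intro hU. apply open_local. intros x hx. destruct (mul_cont _ U x a hU hx) as [V [W [hV [hW [ha [hw h]]]]]].
  exists V. split; auto. Qed.
Lemma open_conj {G : ProfiniteGroup} (U : G -> Prop) g : is_open U -> is_open (fun x => U (cjg x g)).
Proof. intro hU. unfold conj. exact (open_rmul (fun y => U (inv g ** y)) g (open_lmul U (inv g) hU)). Qed.

Lemma open_sub {G : ProfiniteGroup} (A O : G -> Prop) : is_subgroup G A -> is_open O -> O one -> (forall x, O x -> A x) -> is_open A.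
Proof. intros sA hO h1 hOA. apply open_local. intros x hx. exists (fun y => O (inv x ** y)). split. now apply open_lmul.
  split. now rewrite mulVg. intros y hy. rewrite <- (mulKV x y). apply sg_mul; auto. Qed.

Lemma open_inter_list {G : ProfiniteGroup} {T : Type} (l : list T) (f : T -> G -> Prop) :
  (forall t, In t l -> is_open (f t)) -> is_open (fun x => forall t, In t l -> f t x).
Proof. induction l as [|a l IH]; intro h.
  - apply (oext _ _ (open_full _)). intro x; split; auto. intros _ _ [].
  - apply (oext _ _ (open_inter _ _ _ (h a (or_introl eq_refl)) (IH (fun t ht => h t (or_intror ht))))).
    intro x. split. intros [h1 h2] t [<-|ht]; auto. intro k. split; auto. apply k; now left. intros t ht; apply k; now right. Qed.

Lemma open_union2 {G : ProfiniteGroup} (U V : G -> Prop) : is_open U -> is_open V -> is_open (fun x => U x \/ V x).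
Proof. intros hU hV. apply (oext (fun x => exists W, (W = U \/ W = V) /\ W x)).
  apply open_union. intros W [->| ->]; auto.
  intro x. split. intros [W [[->| ->] h]]; auto. intros [h|h]. exists U; auto. exists V; auto. Qed.

Lemma closed_cj {G : ProfiniteGroup} (A : G -> Prop) g : closedS A -> closedS (cj A g).
Proof. intro h. exact (open_conj _ (inv g) h). Qed.
Lemma closed_lmul {G : ProfiniteGroup} (A : G -> Prop) a : closedS A -> closedS (fun x => A (a ** x)).
Proof. intro h. exact (open_lmul _ a h). Qed.
Lemma closed_inter {G : ProfiniteGroup} {I : Type} (P : I -> Prop) (F : I -> G -> Prop) :
  (forall i, P i -> closedS (F i)) -> closedS (fun x => forall i, P i -> F i x).
Proof. intro h. unfold closedS. apply (oext (fun x => exists W, (exists i, P i /\ W = fun y => ~ F i y) /\ W x)).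
  apply open_union. intros W [i [hi ->]]. exact (h i hi).
  intro x. split. intros [W [[i [hi ->]] hx]] hall. apply hx. auto.
  intro hn. apply NNPP. intro hn2. apply hn. intros i hi. apply NNPP. intro hf. apply hn2. exists (fun y => ~ F i y). split; eauto. Qed.

Lemma closed_cosets {G : ProfiniteGroup} (A : G -> Prop) (l : list G) : closedS A -> closedS (fun x => exists y, In y l /\ A (inv y ** x)).
Proof. intro h. unfold closedS. apply (oext (fun x => forall y, In y l -> ~ A (inv y ** x))).
  apply open_inter_list. intros y _. exact (open_lmul _ (inv y) h).
  intro x. split. intros hall [y [hy ha]]. exact (hall y hy ha). intros hn y hy ha. apply hn; eauto. Qed.

Lemma open_fi {G : ProfiniteGroup} (A : G -> Prop) : is_subgroup G A -> is_open A -> fi A full.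
Proof. intros sA hA.
  set (F := fun U : G -> Prop => exists y, U = fun x => A (inv y ** x)).
  destruct (compact _ F) as [l [hl1 hl2]].
  - intros U [y ->]. now apply open_lmul.
  - intro x. exists (fun z => A (inv x ** z)). split. exists x; reflexivity. rewrite mulVg. now apply sg_one.
  - set (ch := fun U : G -> Prop => epsilon (inhabits (@one G)) (fun y => U = fun x => A (inv y ** x))).
    exists (map ch l). split. intros; exact I.
    intros x _. destruct (hl2 x) as [U [hU hx]]. exists (ch U). split. now apply in_map.
    assert (e : U = fun z => A (inv (ch U) ** z)). { unfold ch. apply epsilon_spec. exact (hl1 U hU). }
    rewrite e in hx. exact hx. Qed.

Lemma closed_fi_open {G : ProfiniteGroup} (A : G -> Prop) : is_subgroup G A -> closedS A -> fi A full -> is_open A.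
Proof. intros sA hA [l [_ hl]].
  apply (oext (fun x => forall y, In y l -> (fun y x => ~ A y -> ~ A (inv y ** x)) y x)).
  - apply open_inter_list. intros y _. destruct (classic (A y)) as [ay|ay].
    + apply (oext _ _ (open_full _)). intro x. split; intros; [tauto|exact I].
    + apply (oext _ _ (open_lmul _ (inv y) hA)). intro x. split; auto.
  - intro x. split.
    + intro h. destruct (hl x I) as [y [hy ha]]. destruct (classic (A y)) as [ay|ay].
      rewrite <- (mulKV y x). apply sg_mul; auto. exfalso. exact (h y hy ay ha).
    + intros hx y hy hny ha. apply hny. replace y with (x ** inv (inv y ** x)). apply sg_mul; auto. apply sg_inv; auto.
      rewrite inv_mul, inv_inv, mulA, mulgV, mul1g. reflexivity. Qed.


Lemma orb_iff {G : ProfiniteGroup} (L : G -> Prop) : orbital G L <-> is_subgroup G L /\ closedS L /\ is_open (nz L).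
Proof. unfold orbital, orbital_in. rewrite open_in_full. fold (closed_subgroup G L). rewrite closed_sg_iff. unfold nz. tauto. Qed.

Definition inF {G : ProfiniteGroup} (H L : G -> Prop) := orbital G L /\ subset H L /\ fi H L.

Lemma conj_reps {G : ProfiniteGroup} (A D : G -> Prop) : is_subgroup G A -> is_open (nz A) -> is_subgroup G D ->
  exists ds, (forall d, In d ds -> D d) /\ forall g, D g -> exists d, In d ds /\ forall x, cj A g x <-> cj A d x.
Proof. intros sA hA sD. pose proof (open_fi _ (sg_nz A) hA) as hfi.
  destruct (fi_restrict (nz A) full D (sg_nz A) sD hfi (fun _ _ => I)) as [cs [hc1 hc2]].
  exists (map inv cs). split.
  - intros d hd. apply in_map_iff in hd. destruct hd as [c [<- hc]]. apply sg_inv; auto.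
  - intros g hg. destruct (hc2 (inv g) (sg_inv _ _ sD hg)) as [c [hc [hn _]]].
    exists (inv c). split. now apply in_map.
    intro x. set (n := inv c ** inv g) in hn.
    assert (eg : g = inv n ** inv c). { unfold n. rewrite inv_mul, !inv_inv, mulgK. reflexivity. }
    rewrite eg. rewrite <- cj_cj. unfold cj at 1. rewrite (nz_cj A (inv n)). tauto. apply sg_inv; auto. apply sg_nz. Qed.

Lemma fi_one_trans {G : ProfiniteGroup} (A B C : G -> Prop) : is_subgroup G A -> is_subgroup G B -> is_subgroup G C ->
  fi (fun x => A x /\ B x) A -> fi (fun x => B x /\ C x) B -> fi (fun x => A x /\ C x) A.
Proof. intros sA sB sC h1 h2.
  pose proof (fi_restrict _ B (fun x => A x /\ B x) (sg_inter _ _ sB sC) (sg_inter _ _ sA sB) h2 (fun x h => proj2 h)) as h3.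
  pose proof (fi_trans _ _ A sA (fun x h => proj1 h) h3 h1) as h4.
  eapply fi_coarse; [|exact h4]. simpl. tauto. Qed.

Lemma fi_inter_list {G : ProfiniteGroup} (H : G -> Prop) (f : G -> G -> Prop) (ds : list G) : is_subgroup G H ->
  (forall d, In d ds -> is_subgroup G (f d)) -> (forall d, In d ds -> fi (fun x => H x /\ f d x) H) ->
  fi (fun x => H x /\ forall d, In d ds -> f d x) H.
Proof. intro sH. induction ds as [|a ds IH]; intros hs hf.
  - eapply fi_coarse; [|exact (fi_refl H sH)]. intros x hx. split; auto. intros _ [].
  - assert (s1 : is_subgroup G (fun x => H x /\ forall d, In d ds -> f d x)).
    { apply (sg_ext (fun x => H x /\ (fun x => forall d, In d ds -> f d x) x)). tauto. apply sg_inter; auto.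
      split; [|split]. intros d0 hd; apply sg_one; apply hs; now right. intros x y hx hy d0 hd; apply sg_mul; auto; apply hs; now right. intros x hx d0 hd; apply sg_inv; auto; apply hs; now right. }
    pose proof (fi_inter _ _ H (sg_inter _ _ sH (hs a (or_introl eq_refl))) s1 sH (hf a (or_introl eq_refl))
      (IH (fun d h => hs d (or_intror h)) (fun d h => hf d (or_intror h)))) as h.
    eapply fi_coarse; [|exact h]. simpl. intros x [[hx ha] [_ hr]]. split; auto. intros d [<-|hd]; auto. Qed.

Lemma cj_self {G : ProfiniteGroup} (L : G -> Prop) s : is_subgroup G L -> L s -> forall x, cj L s x <-> L x.
Proof. intros sL hs x. unfold cj, conj. rewrite inv_inv. split.
  - intro h. replace x with (inv s ** ((s ** (x ** inv s)) ** s)). apply sg_mul; [auto|apply sg_inv; auto|apply sg_mul; auto].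
    rewrite mulA, mulVK, mulgKV. reflexivity.
  - intro h. apply sg_mul; auto. apply sg_mul; auto. apply sg_inv; auto. Qed.

Lemma base_comm {G : ProfiniteGroup} (H L : G -> Prop) s : is_subgroup G H -> is_subgroup G L ->
  (forall x, H x -> L x) -> fi H L -> L s -> fi (fun x => H x /\ cj H s x) H.
Proof. intros sH sL hHL hfi hs.
  assert (h1 : fi (cj H s) L). { eapply fi_ext2; [|exact (fi_cj H L s hfi)]. apply cj_self; auto. }
  pose proof (fi_inter H (cj H s) L sH (sg_cj H s sH) sL hfi h1) as h2.
  pose proof (fi_restrict _ L H (sg_inter _ _ sH (sg_cj H s sH)) sH h2 hHL) as h3.
  eapply fi_coarse; [|exact h3]. simpl. tauto. Qed.

Lemma directed {G : ProfiniteGroup} (H L1 L2 : G -> Prop) : orbital G H -> inF H L1 -> inF H L2 ->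
  exists L3, inF H L3 /\ subset L1 L3 /\ subset L2 L3.
Proof.
  intros hH [o1 [s1H fi1]] [o2 [s2H fi2]].
  apply (proj1 (orb_iff _)) in hH as [sH [cH oH]]. apply (proj1 (orb_iff _)) in o1 as [sL1 [cL1 oL1]]. apply (proj1 (orb_iff _)) in o2 as [sL2 [cL2 oL2]].
  set (S := fun x => L1 x \/ L2 x).
  set (D := fun x => exists w, (forall y, In y w -> S y) /\ x = prod w).
  assert (sD : is_subgroup G D).
  { split; [|split].
    - exists []. split. intros _ []. reflexivity.
    - intros x y [w1 [h1 ->]] [w2 [h2 ->]]. exists (w1 ++ w2). split. intros z hz. apply in_app_or in hz. destruct hz; auto.
      now rewrite prod_app.
    - intros x [w [h ->]]. exists (rev (map inv w)). split. intros z hz. apply in_rev in hz. apply in_map_iff in hz.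
      destruct hz as [s [<- hs]]. destruct (h s hs) as [k|k]; [left|right]; apply sg_inv; auto.
      apply inv_prod. }
  assert (SD : forall s, S s -> D s). { intros s hs. exists [s]. split. intros y [<-|[]]; auto. unfold prod; simpl. now rewrite mulg1. }
  assert (Dconj : forall g x, D g -> D x -> D (cjg x g)). { intros g x hg hx. unfold conj. apply sg_mul; auto. apply sg_inv; auto. apply sg_mul; auto. }
  assert (base : forall s, S s -> fi (fun x => H x /\ cj H s x) H).
  { intros s [hs|hs]. apply (base_comm H L1); auto. apply (base_comm H L2); auto. }
  assert (comm : forall g, D g -> fi (fun x => H x /\ cj H g x) H).
  { intros g [w [hw ->]]. induction w as [|a w IH].
    - eapply fi_coarse; [|exact (fi_refl H sH)]. intros x hx. split; auto. unfold cj. simpl. rewrite inv_one, conj_one. auto.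
    - rewrite prod_cons. set (g' := prod w) in *.
      assert (IH' : fi (fun x => H x /\ cj H g' x) H). { apply IH. intros; apply hw; now right. }
      assert (h2 : fi (fun x => cj H g' x /\ cj H (a ** g') x) (cj H g')).
      { eapply fi_coarse; [|exact (fi_cj _ _ g' (base a (hw a (or_introl eq_refl))))]. intros x [k1 k2]. split. exact k1.
        apply cj_cj. exact k2. }
      exact (fi_one_trans H (cj H g') (cj H (a ** g')) sH (sg_cj H g' sH) (sg_cj H _ sH) IH' h2). }
  destruct (conj_reps H D sH oH sD) as [dsH [hdsH hrepH]].
  set (Hc := fun x => forall g, D g -> cj H g x).
  assert (HcH : forall x, Hc x -> H x).
  { intros x hx. specialize (hx one (sg_one _ sD)). unfold cj in hx. now rewrite inv_one, conj_one in hx. }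
  assert (HcE : forall x, Hc x <-> H x /\ forall d, In d dsH -> cj H d x).
  { intro x. split. intro hx. split. apply HcH; exact hx. intros d hd. apply hx. apply hdsH; exact hd.
    intros [hx hd] g hg. destruct (hrepH g hg) as [d [hd' e]]. apply e. auto. }
  assert (sHc : is_subgroup G Hc).
  { split; [|split]. intros g hg. apply sg_one. apply sg_cj; auto.
    intros x y hx hy g hg. apply sg_mul. apply sg_cj; auto. auto. auto.
    intros x hx g hg. apply sg_inv. apply sg_cj; auto. auto. }
  assert (fiHc : fi Hc H).
  { eapply fi_coarse; [|exact (fi_inter_list H (cj H) dsH sH (fun d _ => sg_cj H d sH) (fun d hd => comm d (hdsH d hd)))].
    intros x hx. apply HcE. exact hx. }
  assert (nHc : forall g x, D g -> Hc x -> Hc (cjg x g)).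
  { intros g x hg hx g' hg'. unfold cj. rewrite conj_conj. specialize (hx (g' ** inv g)).
    unfold cj in hx. rewrite inv_mul, inv_inv in hx. apply hx. apply sg_mul; auto. apply sg_inv; auto. }
  assert (cHc : closedS Hc). { apply (closed_inter D (fun g => cj H g)). intros g _. apply closed_cj; auto. }
  set (Ls := [L1; L2]).
  assert (Lf : forall L, In L Ls -> is_subgroup G L /\ is_open (nz L) /\ (forall x, H x -> L x) /\ fi H L /\ (forall x, L x -> S x)).
  { intros L [<-|[<-|[]]]. exact (Logic.conj sL1 (Logic.conj oL1 (Logic.conj s1H (Logic.conj fi1 (fun x hx => or_introl hx))))). exact (Logic.conj sL2 (Logic.conj oL2 (Logic.conj s2H (Logic.conj fi2 (fun x hx => or_intror hx))))). }
  set (dspec := fun L ds => (forall d, In d ds -> D d) /\ forall g, D g -> exists d, In d ds /\ forall x, cj L g x <-> cj L d x).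
  set (dsr := fun L => epsilon (inhabits (@nil G)) (dspec L)).
  assert (hdsr : forall L, In L Ls -> dspec L (dsr L)).
  { intros L hL. unfold dsr. apply epsilon_spec. destruct (Lf L hL) as [a [b _]]. exact (conj_reps L D a b sD). }
  assert (fiL : forall L, In L Ls -> forall d, D d -> fi Hc (cj L d)).
  { intros L hL d hd. destruct (Lf L hL) as [a [b [c [e _]]]].
    pose proof (fi_trans Hc H L a c fiHc e) as h1.
    eapply fi_coarse; [|exact (fi_cj _ _ d h1)]. intros x hx. unfold cj in hx.
    pose proof (nHc d _ hd hx) as h. rewrite conjVK in h. exact h. }
  set (rspec := fun L d l => (forall y, In y l -> cj L d y) /\ forall x, cj L d x -> exists y, In y l /\ Hc (inv y ** x)).
  set (rl := fun L d => epsilon (inhabits (@nil G)) (rspec L d)).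
  assert (hrl : forall L, In L Ls -> forall d, D d -> rspec L d (rl L d)).
  { intros L hL d hd. unfold rl. apply epsilon_spec. exact (fiL L hL d hd). }
  assert (cjD : forall L, In L Ls -> forall d, D d -> forall x, cj L d x -> D x).
  { intros L hL d hd x hx. rewrite <- (conjVK x d). apply Dconj; auto. apply SD. apply (Lf L hL). exact hx. }
  set (X := flat_map (fun L => flat_map (rl L) (dsr L)) Ls).
  assert (memX : forall x, In x X -> exists L d, In L Ls /\ In d (dsr L) /\ In x (rl L d)).
  { intros x hx. apply in_flat_map in hx. destruct hx as [L [hL hx]]. apply in_flat_map in hx. destruct hx as [d [hd hx]]. eauto 6. }
  assert (inX : forall L d x, In L Ls -> In d (dsr L) -> In x (rl L d) -> In x X).
  { intros L d x hL hd hx. apply in_flat_map. exists L. split; auto. apply in_flat_map. eauto. }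
  assert (fiD : fi Hc D).
  { apply (dietzmann Hc D S X sHc sD).
    - intros x hx. apply SD. left. apply s1H. auto.
    - intros g x hg hx. auto.
    - intros x hx. destruct (memX x hx) as [L [d [hL [hd hx']]]]. pose proof (proj1 (hdsr L hL) d hd) as hDd.
      apply (cjD L hL d hDd). apply (proj1 (hrl L hL d hDd)). exact hx'.
    - intros x g hx hg. destruct (memX x hx) as [L [d [hL [hd hx']]]]. pose proof (proj1 (hdsr L hL) d hd) as hDd.
      pose proof (proj1 (hrl L hL d hDd) x hx') as hcx.
      assert (h1 : cj L (d ** g) (cjg x g)). { apply cj_cj. apply cj_memK. exact hcx. }
      destruct (proj2 (hdsr L hL) (d ** g) (sg_mul _ _ _ sD hDd hg)) as [d' [hd' e]].
      apply e in h1. pose proof (proj1 (hdsr L hL) d' hd') as hDd'.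
      destruct (proj2 (hrl L hL d' hDd') _ h1) as [y [hy hN]]. exists y. split; auto. eapply inX; eauto.
    - intros x hx. destruct (memX x hx) as [L [d [hL [hd hx']]]]. pose proof (proj1 (hdsr L hL) d hd) as hDd.
      apply (fi_torsion Hc (cj L d) x sHc (fiL L hL d hDd)). apply (proj1 (hrl L hL d hDd)). exact hx'.
      apply sg_cj. apply (Lf L hL).
    - exact SD.
    - intros s hs. assert (hL : exists L, In L Ls /\ L s). { destruct hs. exists L1; simpl; auto. exists L2; simpl; auto. }
      destruct hL as [L [hL hLs]].
      destruct (proj2 (hdsr L hL) one (sg_one _ sD)) as [d' [hd' e]].
      assert (h1 : cj L d' s). { apply e. unfold cj. rewrite inv_one, conj_one. exact hLs. }
      pose proof (proj1 (hdsr L hL) d' hd') as hDd'.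
      destruct (proj2 (hrl L hL d' hDd') _ h1) as [y [hy hN]]. exists y. split; auto. eapply inX; eauto.
    - intros d hd. exact hd. }
  assert (Dn : forall n, nz L1 n -> nz L2 n -> forall x, D x -> D (cjg x n)).
  { intros n h1 h2 x [w [hw ->]]. exists (map (fun s => cjg s n) w). split.
    intros y hy. apply in_map_iff in hy. destruct hy as [s [<- hs]]. destruct (hw s hs) as [k|k].
    left. exact (proj1 (proj2 h1 s) k). right. exact (proj1 (proj2 h2 s) k).
    symmetry. apply prod_conj. }
  exists D. split; [|split].
  - split; [|split].
    + apply orb_iff. split; auto. split.
      * destruct fiD as [l [hl1 hl2]]. unfold closedS.
        apply (oext _ _ (closed_cosets Hc l cHc)). intro x. split.
        -- intros hn hx. apply hn. apply hl2; auto.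
        -- intros hn [y [hy hc]]. apply hn. rewrite <- (mulKV y x). apply sg_mul; auto. apply SD. left. apply s1H. auto.
      * apply (open_sub _ (fun n => nz L1 n /\ nz L2 n) (sg_nz D) (open_inter _ _ _ oL1 oL2)).
        split; apply sg_one; apply sg_nz.
        intros n [h1 h2]. split. exact I. intro x. split. apply Dn; auto.
        intro hx. rewrite <- (conjK x n). apply Dn; auto; apply sg_inv; auto; apply sg_nz.
    + intros x hx. apply SD. left. apply s1H. auto.
    + eapply fi_coarse; [|exact fiD]. auto.
  - intros x hx. apply SD. now left.
  - intros x hx. apply SD. now right.
Qed.


Lemma max_elem {G : ProfiniteGroup} (Hmax : max_closed_subgroups G) (P : (G -> Prop) -> Prop)
  (hP : forall L, P L -> closed_subgroup G L) (L0 : G -> Prop) (h0 : P L0) :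
  exists M, P M /\ forall L, P L -> subset M L -> subset L M.
Proof. apply NNPP. intro hn.
  assert (hex : forall M, exists L, P M -> P L /\ subset M L /\ ~ subset L M).
  { intro M. destruct (classic (P M)) as [hM|hM].
    - apply NNPP. intro hn2. apply hn. exists M. split; auto. intros L hL hs. apply NNPP. intro hns. apply hn2. exists L. auto.
    - exists M. intro; contradiction. }
  set (f := fun M => proj1_sig (constructive_indefinite_description _ (hex M))).
  assert (hf : forall M, P M -> P (f M) /\ subset M (f M) /\ ~ subset (f M) M).
  { intros M hM. unfold f. destruct (constructive_indefinite_description _ (hex M)) as [L hL]. simpl. auto. }
  set (C := fun n => nat_rect (fun _ => G -> Prop) L0 (fun _ M => f M) n).
  assert (hC : forall n, P (C n)). { induction n; simpl. exact h0. apply hf. exact IHn. }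
  destruct (Hmax C) as [m hm].
  - intro n. apply hP. apply hC.
  - intro n. apply (hf (C n) (hC n)).
  - apply (hf (C m) (hC m)). intros x hx. apply (hm (S m) ltac:(lia) x). exact hx. Qed.

Lemma iso_contains {G : ProfiniteGroup} (H L : G -> Prop) : inF H L -> subset L (isolator G H).
Proof. intros [o [s f]] x hx K _ hK. exact (hK L o s f x hx). Qed.

Lemma iso_closed_sg {G : ProfiniteGroup} (H : G -> Prop) : is_subgroup G (isolator G H) /\ closedS (isolator G H).
Proof. split.
  - split; [|split].
    + intros K hK _. apply (proj1 (closed_sg_iff K)) in hK. apply sg_one; apply hK.
    + intros x y hx hy K hK hc. apply sg_mul. apply (proj1 (closed_sg_iff K) hK). apply hx; auto. apply hy; auto.
    + intros x hx K hK hc. apply sg_inv. apply (proj1 (closed_sg_iff K) hK). apply hx; auto.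
  - unfold closedS. apply (oext (fun x => ~ forall K, (closed_subgroup G K /\ (forall L, orbital G L -> subset H L -> fi H L -> subset L K)) -> K x)).
    + apply (closed_inter (fun K => closed_subgroup G K /\ (forall L, orbital G L -> subset H L -> fi H L -> subset L K)) (fun K => K)).
      intros K [hK _]. apply (proj1 (closed_sg_iff K) hK).
    + intro x. unfold isolator. split; intros h1 h2; apply h1; intros; apply h2; tauto. Qed.

Lemma iso_conj {G : ProfiniteGroup} (H : G -> Prop) g : is_subgroup G H -> nz H g -> forall x, isolator G H x -> isolator G H (cjg x g).
Proof. intros sH hg x hx K hK hc.
  apply (proj1 (closed_sg_iff K)) in hK as [sK cK].
  apply (hx (fun y => K (cjg y g))).
  - apply closed_sg_iff. split.
    + apply (sg_ext (cj K (inv g))). intro y. unfold cj. now rewrite inv_inv. now apply sg_cj.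
    + unfold closedS. apply (oext _ _ (closed_cj K (inv g) cK)). intro y. unfold cj. now rewrite inv_inv.
  - intros L o s f y hy.
    assert (hgi : nz H (inv g)) by (apply sg_inv; auto; apply sg_nz).
    apply (proj1 (orb_iff L)) in o as [sL [cL oL]].
    apply (hc (cj L g)).
    + apply orb_iff. split. now apply sg_cj. split. now apply closed_cj.
      apply (open_sub _ (fun n => nz L (cjg n (inv g))) (sg_nz _) (open_conj _ _ oL)).
      rewrite conj_1. apply sg_one, sg_nz.
      intros n hn. split. exact I. intro z. unfold cj.
      assert (e : cjg (cjg z n) (inv g) = cjg (cjg z (inv g)) (cjg n (inv g))).
      { rewrite !conj_conj. f_equal. unfold conj. rewrite inv_inv, mulVK. reflexivity. }
      rewrite e. apply (proj2 hn).
    + intros z hz. unfold cj. apply s. exact (proj1 (proj2 hgi z) hz).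
    + eapply fi_coarse; [|exact (fi_cj H L g f)]. intros z hz. unfold cj in hz. exact (proj2 (proj2 hgi z) hz).
    + apply cj_memK. exact hy. Qed.

Lemma iso_fi {G : ProfiniteGroup} (Hmax : max_closed_subgroups G) (H : G -> Prop) : orbital G H ->
  inF H (isolator G H) /\ (forall x, H x -> isolator G H x).
Proof. intros hH. pose proof hH as hH'. apply (proj1 (orb_iff H)) in hH' as [sH [cH oH]].
  assert (hHF : inF H H). { split; auto. split. intros x hx; exact hx. apply fi_refl; auto. }
  destruct (max_elem Hmax (inF H) (fun L hL => proj1 (proj1 hL)) H hHF) as [M [hM hMmax]].
  assert (allM : forall L, inF H L -> subset L M).
  { intros L hL. destruct (directed H L M hH hL hM) as [L3 [h3 [hs1 hs2]]].
    pose proof (hMmax L3 h3 hs2) as e. intros x hx. apply e, hs1, hx. }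
  assert (eM : forall x, isolator G H x <-> M x).
  { intro x. split.
    - intro hx. apply hx. exact (proj1 (proj1 hM)). intros L o s f. apply allM. split; auto.
    - apply iso_contains. exact hM. }
  destruct (iso_closed_sg H) as [sI cI].
  split.
  - split; [|split].
    + apply orb_iff. split; auto. split; auto.
      apply (open_sub _ (nz H) (sg_nz _) oH (sg_one _ (sg_nz H))).
      intros n hn. split. exact I. intro x. split. apply iso_conj; auto.
      intro h. rewrite <- (conjK x n). apply iso_conj; auto. apply sg_inv; auto. apply sg_nz.
    + intros x hx. apply iso_contains with H; auto.
    + eapply fi_ext2; [|exact (proj2 (proj2 hM))]. intro x. symmetry; apply eM.
  - apply iso_contains. exact hHF. Qed.


Lemma part1 {G : ProfiniteGroup} (Hmax : max_closed_subgroups G) (H : G -> Prop) : orbital G H ->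
  isolated_orbital G (isolator G H) /\ (normal G H -> normal G (isolator G H)).
Proof. intros hH. destruct (iso_fi Hmax H hH) as [[oI [sHI fiI]] HI].
  pose proof hH as hH'. apply (proj1 (orb_iff H)) in hH' as [sH [cH oH]].
  split.
  - split. exact oI. intros H' o' s' [x [hx hnx]] hfi. apply hnx.
    pose proof (proj1 (proj1 (orb_iff _) o')) as sH'.
    apply (iso_contains H H'); auto. split; auto. split.
    intros y hy. apply s', sHI, hy. exact (fi_trans H _ H' sH' s' fiI hfi).
  - intros hn g x _ hx. apply iso_conj; auto. split. exact I. intro y. split. intro hy. apply hn; auto. exact I.
    intro hy. rewrite <- (conjK y g). apply hn; auto. exact I. Qed.

Theorem lemma1p11 (G : ProfiniteGroup) (Hmax : max_closed_subgroups G) :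
  (forall H : G -> Prop, orbital G H ->
     isolated_orbital G (isolator G H) /\ (normal G H -> normal G (isolator G H))) /\
  (orbitally_sound G -> forall H : G -> Prop,
     closed_subgroup G H -> finite_index G H full -> orbitally_sound_in G H).
Proof.
  split. exact (part1 Hmax).
  intros hsound Hs hHs hfiHs K [[[sK [hKHs [_ [V [hV eV]]]]] [_ [W [hW eW]]]] hiso].
  apply (proj1 (closed_sg_iff Hs)) in hHs as [sHs cHs].
  assert (oHs : is_open Hs) by (apply closed_fi_open; auto).
  assert (oK : orbital G K).
  { apply orb_iff. split; auto. split.
    - unfold closedS. apply (oext _ _ (open_union2 _ _ cHs hV)). intro x. split.
      + intros [h|h] hk. apply h, hKHs, hk. destruct (classic (Hs x)) as [hs|hs]. apply (proj2 (eV x hs)) in h. tauto. apply hs, hKHs, hk.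
      + intro hk. destruct (classic (Hs x)) as [hs|hs]. right. apply eV; auto. left; auto.
    - apply (open_sub _ (fun x => Hs x /\ W x) (sg_nz K) (open_inter _ _ _ oHs hW)).
      split. apply sg_one; auto. apply eW. apply sg_one; auto. split. apply sg_one; auto. intro x. now rewrite conj_one.
      intros n [hn hw]. apply eW in hw; auto. destruct hw as [_ hw]. split. exact I. exact hw. }
  destruct (iso_fi Hmax K oK) as [[oI [sKI fiI]] KI].
  set (II := isolator G K) in *.
  assert (nI : normal G II) by (apply hsound; exact (proj1 (part1 Hmax K oK))).
  pose proof (proj1 (orb_iff _) oI) as [sI [cI _]].
  assert (nI' : forall g x, II (cjg x g) -> II x).
  { intros g x h. rewrite <- (conjK x g). apply nI. exact I. exact h. }
  assert (sub : forall x, II x -> Hs x -> K x).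
  { intros x hx hs. apply NNPP. intro hk. apply (hiso (fun y => II y /\ Hs y)).
    - split. split. apply sg_inter; auto. split. intros y [_ h]; exact h.
      split. intros y [h _]; exact h. exists (fun y => ~ II y). split. exact cI. intros y hy. tauto.
      split. intros y [h _]; exact h. exists (fun _ => True). split. apply open_full. intros y hy. split; intros _; auto.
      split; auto. intro z. split.
      + intros [h1 h2]. split. apply nI; auto. exact Logic.I. unfold conj. apply sg_mul; auto. apply sg_inv; auto. apply sg_mul; auto.
      + intros [h1 h2]. split. eapply nI'; eauto. rewrite <- (conjK z y). unfold conj at 1. apply sg_mul; auto. apply sg_inv; auto. apply sg_inv; auto. apply sg_mul; auto. apply sg_inv; auto.
    - intros y hy. split; auto.
    - exists x. auto.
    - eapply fi_coarse; [|exact (fi_restrict K II (fun y => II y /\ Hs y) sK (sg_inter _ _ sI sHs) fiI (fun y h => proj1 h))].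
      intros y [h _]; exact h. }
  intros g x hg hx. apply sub. apply nI. exact Logic.I. apply KI, hx.
  unfold conj. apply sg_mul; auto. apply sg_inv; auto. apply sg_mul; auto.
Qed.
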